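(* A commutative ring $R$ is locally stable if and only if the formal power series ring $R[[X]]$ is locally stable.
   Context: All rings are commutative with identity. A ring $S$ has stable range 1 if whenever $aS+bS=S$ there is $y\in S$ with $a+by$ a unit. $S$ is locally stable if whenever $a,b\in S$ with $aS+bS=S$ there is $y\in S$ such that $S/(a+by)S$ has stable range 1. *)

(* Defs.v *)
From mathcomp Require Import all_boot all_algebra.
Set Implicit Arguments. Unset Strict Implicit. Unset Printing Implicit Defensive.
Import GRing.Theory.
Local Open Scope ring_scope.

(* Generic notions, stated for a commutative ring presented by its addition,
   multiplication and identity (so that they apply both to a comNzRingType R and
   to the formal power series ring R[[X]] built below). *)
Section Generic.
Variables (T : Type) (add mul : T -> T -> T) (one : T).

Definition congr_mod (c x y : T) : Prop := exists t, x = add y (mul c t).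

(* S/cS has stable range 1: whenever abar*Sbar + bbar*Sbar = Sbar, there is
   y with abar + bbar*ybar a unit of Sbar. *)
Definition sr1_quot (c : T) : Prop :=
  forall a b : T,
    (exists u v, congr_mod c (add (mul a u) (mul b v)) one) ->
    exists y w, congr_mod c (mul (add a (mul b y)) w) one.

Definition locally_stable_gen : Prop :=
  forall a b : T,
    (exists u v, add (mul a u) (mul b v) = one) ->
    exists y, sr1_quot (add a (mul b y)).
End Generic.

Definition locally_stable (R : comNzRingType) : Prop :=
  @locally_stable_gen R (@GRing.add R) (@GRing.mul R) 1.

Definition fps (R : comNzRingType) := nat -> R.
Definition fps_add (R : comNzRingType) (f g : fps R) : fps R := fun n => f n + g n.
Definition fps_mul (R : comNzRingType) (f g : fps R) : fps R :=
  fun n => \sum_(i < n.+1) f i * g (n - i)%N.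
Definition fps_one (R : comNzRingType) : fps R := fun n => (n == 0%N)%:R.

Definition fps_locally_stable (R : comNzRingType) : Prop :=
  @locally_stable_gen (fps R) (@fps_add R) (@fps_mul R) (fps_one R).

(* Main.v *)
From HB Require Import structures.
Require Import Defs.
From mathcomp Require Import all_boot all_algebra.
From mathcomp Require Import boolp.
From mathcomp Require Import ring zify.
Set Implicit Arguments. Unset Strict Implicit. Unset Printing Implicit Defensive.
Import GRing.Theory.
Local Open Scope ring_scope.

Section FPS.
Variable R : comNzRingType.
Definition S := fps R.
HB.instance Definition _ := gen_eqMixin S.
HB.instance Definition _ := gen_choiceMixin S.

Definition szero : S := fun _ => 0.
Definition sopp (f : S) : S := fun n => - f n.
Definition sadd (f g : S) : S := fps_add f g.

Lemma saddA : associative sadd.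
Proof. by move=> f g h; apply: funext => n; rewrite /sadd /fps_add addrA. Qed.
Lemma saddC : commutative sadd.
Proof. by move=> f g; apply: funext => n; rewrite /sadd /fps_add addrC. Qed.
Lemma sadd0 : left_id szero sadd.
Proof. by move=> f; apply: funext => n; rewrite /sadd /fps_add /szero add0r. Qed.
Lemma saddN : left_inverse szero sopp sadd.
Proof. by move=> f; apply: funext => n; rewrite /sadd /fps_add /szero /sopp addNr. Qed.

HB.instance Definition _ := GRing.isZmodule.Build S saddA saddC sadd0 saddN.

Definition tr (N : nat) (f : S) : {poly R} := \poly_(i < N.+1) f i.

Lemma mulE (f g : S) n N : (n <= N)%N -> fps_mul f g n = (tr N f * tr N g)`_n.
Proof.
move=> hn; rewrite coefM; apply: eq_bigr => i _.
rewrite !coef_poly; have hi := ltn_ord i.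
rewrite ifT; last by lia.
rewrite ifT //; lia.
Qed.

Lemma coefM_r (p q q' : {poly R}) n :
  (forall i, (i <= n)%N -> q`_i = q'`_i) -> (p * q)`_n = (p * q')`_n.
Proof.
move=> h; rewrite !coefM; apply: eq_bigr => i _; rewrite h //; exact: leq_subr.
Qed.

Definition smul (f g : S) : S := fps_mul f g.
Definition sone : S := fps_one R.

Lemma smulA : associative smul.
Proof.
move=> f g h; apply: funext => n; rewrite /smul (mulE _ _ (leqnn n)) (mulE _ _ (leqnn n)).
transitivity ((tr n f * (tr n g * tr n h))`_n).
  apply: coefM_r => i hi; rewrite coef_poly ltnS hi (mulE _ _ hi) //.
rewrite mulrA !(mulrC _ (tr n h)); apply: coefM_r => i hi.
by rewrite coef_poly ltnS hi (mulE _ _ hi).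
Qed.

Lemma smulC : commutative smul.
Proof.
by move=> f g; apply: funext => n; rewrite /smul !(mulE _ _ (leqnn n)) mulrC.
Qed.

Lemma tr_one n : tr n sone = 1.
Proof.
apply/polyP => i; rewrite coef_poly coef1 /sone /fps_one.
by case: i => [|i] //=; case: ifP.
Qed.

Lemma smul1 : left_id sone smul.
Proof.
move=> f; apply: funext => n; rewrite /smul (mulE _ _ (leqnn n)) tr_one mul1r.
by rewrite coef_poly ltnS leqnn.
Qed.

Lemma smulDl : left_distributive smul sadd.
Proof.
move=> f g h; apply: funext => n; rewrite /smul /sadd /fps_add /fps_mul -big_split.
by apply: eq_bigr => i _; rewrite mulrDl.
Qed.

Lemma sone_neq0 : sone != 0.
Proof.
apply/eqP => /(congr1 (fun f : S => f 0%N)); rewrite /sone /fps_one /=.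
move=> /eqP; rewrite oner_eq0 //.
Qed.

HB.instance Definition _ := GRing.Zmodule_isComNzRing.Build S smulA smulC smul1 smulDl sone_neq0.


Lemma smulE (f g : S) n : (f * g) n = \sum_(i < n.+1) f i * g (n - i)%N.
Proof. by []. Qed.
Lemma saddE (f g : S) n : (f + g) n = f n + g n.
Proof. by []. Qed.
Lemma soneE n : (1 : S) n = (n == 0%N)%:R.
Proof. by []. Qed.

Lemma c0M (f g : S) : (f * g) 0%N = f 0%N * g 0%N.
Proof. by change (fps_mul f g 0%N = f 0%N * g 0%N); rewrite /fps_mul big_ord1. Qed.
Lemma c0D (f g : S) : (f + g) 0%N = f 0%N + g 0%N.
Proof. by []. Qed.
Lemma c0B (f g : S) : (f - g) 0%N = f 0%N - g 0%N.
Proof. by []. Qed.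
Lemma c01 : (1 : S) 0%N = 1.
Proof. by []. Qed.

Definition cst (r : R) : S := fun n => if n == 0%N then r else 0.
Lemma cst0 r : cst r 0%N = r. Proof. by []. Qed.

Lemma cstM a b : cst a * cst b = cst (a * b).
Proof.
apply: funext => n; rewrite smulE big_ord_recl big1 ?addr0.
  by rewrite /cst subn0; case: n => [|n] //=; rewrite mulr0.
by move=> i _; rewrite /cst /=; rewrite mul0r.
Qed.
Lemma cstD a b : cst a + cst b = cst (a + b).
Proof. apply: funext => n; rewrite saddE /cst; case: ifP => _ //; rewrite addr0. by []. Qed.
Lemma cst1 : cst 1 = 1.
Proof. apply: funext => n; rewrite soneE /cst; by case: n. Qed.

Section Inv.
Variable f : S.
Hypothesis f0 : f 0%N = 1.
Fixpoint gs (n : nat) : nat -> R :=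
  match n with
  | 0 => fun _ => 1
  | m.+1 => fun k => if (k <= m)%N then gs m k
                     else - \sum_(i < m.+1) f i.+1 * gs m (m - i)
  end.
Lemma gs_stable m n k : (k <= n)%N -> (n <= m)%N -> gs m k = gs n k.
Proof.
elim: m n => [|m IH] n hk hn.
  by have -> : n = 0%N by lia.
case: (ltngtP n m.+1) => [h|h|->] //; last by lia.
by rewrite /= ifT; [apply: IH; lia | lia].
Qed.
Definition ginv : S := fun k => gs k k.
Lemma ginvP : f * ginv = 1.
Proof.
apply: funext => n; case: n => [|n].
  by rewrite c0M f0 /ginv /= mul1r.
rewrite smulE big_ord_recl f0 mul1r /ginv /= ltnn soneE /=.
have -> : \sum_(i < n.+1) f (bump 0 i) * gs (n.+1 - bump 0 i) (n.+1 - bump 0 i)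
        = \sum_(i < n.+1) f i.+1 * gs n (n - i).
  apply: eq_bigr => i _; rewrite /bump /= add1n subSS.
  congr (_ * _); symmetry; apply: gs_stable; lia.
by rewrite addNr.
Qed.
End Inv.

Lemma unit_char (c x : S) :
  (exists w t : S, x * w = 1 + c * t) <-> (exists w t : R, x 0%N * w = 1 + c 0%N * t).
Proof.
split.
  move=> [w [t h]]; exists (w 0%N), (t 0%N).
  by have := congr1 (fun g : S => g 0%N) h; rewrite /= c0D !c0M c01.
move=> [w [t h]].
pose e := x * cst w - c * cst t.
have e0 : e 0%N = 1 by rewrite /e c0B !c0M !cst0 h; ring.
have He := ginvP e0.
exists (cst w * ginv e), (cst t * ginv e).
rewrite -He /e; ring.
Qed.

Lemma comax_char (a b c : S) :
  (exists u v t : S, a * u + b * v = 1 + c * t) <->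
  (exists u v t : R, a 0%N * u + b 0%N * v = 1 + c 0%N * t).
Proof.
split.
  move=> [u [v [t h]]]; exists (u 0%N), (v 0%N), (t 0%N).
  by have := congr1 (fun g : S => g 0%N) h; rewrite /= !c0D !c0M c01.
move=> [u [v [t h]]].
have [W [T hW]] : exists w t0 : S, (a * cst u + b * cst v) * w = 1 + c * t0.
  apply/unit_char; exists 1, t.
  by rewrite c0D !c0M !cst0 mulr1 h.
exists (cst u * W), (cst v * W), T; rewrite -hW; ring.
Qed.

End FPS.

Lemma sr1_char (R : comNzRingType) (c : S R) :
  @sr1_quot (fps R) (@fps_add R) (@fps_mul R) (fps_one R) c <->
  @sr1_quot R +%R *%R 1 (c 0%N).
Proof.
split.
  move=> hS a b [u [v [t h]]].
  have hc : exists u v t : S R, cst a * u + cst b * v = 1 + c * t.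
    by apply/comax_char; exists u, v, t; rewrite !cst0.
  have [Y [W [T hY]]] := hS (cst a) (cst b) hc.
  have hY' : (cst a + cst b * Y) * W = 1 + c * T := hY.
  exists (Y 0%N), (W 0%N), (T 0%N).
  by have := congr1 (fun g : S R => g 0%N) hY'; rewrite c0M c0D c0M c0D c0M c01 !cst0.
move=> hR A B [U [V [T h]]]; rewrite -/(S R) in A B U V T h *.
have h' : exists u v t : S R, A * u + B * v = 1 + c * t by exists U, V, T.
have [u [v [t ht]]] := (comax_char A B c).1 h'.
have [y [w [t' hy]]] := hR (A 0%N) (B 0%N) (ex_intro _ u (ex_intro _ v (ex_intro _ t ht))).
have [W [T' hW]] : exists w t0 : S R, (A + B * cst y) * w = 1 + c * t0.
  apply/unit_char; exists w, t'; by rewrite c0D c0M cst0.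
by exists (cst y), W, T'.
Qed.

Theorem corollary2p6 (R : comNzRingType) :
  locally_stable R <-> fps_locally_stable R.
Proof.
split.
  move=> hR A B [U [V h]]; rewrite -/(S R) in A B U V h *.
  have h' : (A : S R) * U + B * V = 1 := h.
  have h0 : A 0%N * U 0%N + B 0%N * V 0%N = 1.
    by have := congr1 (fun g : S R => g 0%N) h'; rewrite c0D !c0M c01.
  have [y hy] := hR (A 0%N) (B 0%N) (ex_intro _ _ (ex_intro _ _ h0)).
  exists (cst y); apply/(sr1_char (A + B * cst y)).
  by rewrite c0D c0M cst0.
move=> hS a b [u [v h]].
have h' : exists U V : S R, cst a * U + cst b * V = 1.
  by exists (cst u), (cst v); rewrite !cstM cstD h cst1.
have [Y hY] := hS (cst a) (cst b) h'.
exists (Y 0%N).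
have := (sr1_char (cst a + cst b * Y)).1 hY.
by rewrite c0D c0M !cst0.
Qed.
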